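(* Let $p<q$ be odd primes. Then $n=pq$ is a $G$-Lehmer number if and only if $q=p+2$ and $8$ divides $p+q$.
   Context: For a positive integer $n$, $\mathcal{G}_n=\{a+bi\in\mathbb{Z}[i]/n\mathbb{Z}[i] : a^2+b^2\equiv 1\pmod n\}$ and $\Phi(n)=|\mathcal{G}_n|$. The function $\mathcal{F}$ is defined by $\mathcal{F}(n)=n-1$ if $n\equiv 1\pmod 4$, $\mathcal{F}(n)=n+1$ if $n\equiv 3 \pmod 4$, $\mathcal{F}(n)=n$ otherwise. A composite number $n$ is a $G$-Lehmer number if $\Phi(n)$ divides $\mathcal{F}(n)$. *)

(* Defs.v *)
From mathcomp Require Import all_boot.
Set Implicit Arguments. Unset Strict Implicit. Unset Printing Implicit Defensive.

(* G_n = { a + b i in Z[i]/nZ[i] : a^2 + b^2 = 1 (mod n) }, elements represented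
   by pairs (a, b) with 0 <= a, b < n. *)
Definition Gn (n : nat) : {set 'I_n * 'I_n} :=
  [set x : 'I_n * 'I_n | (x.1 ^ 2 + x.2 ^ 2 == 1 %[mod n])].

Definition Phi (n : nat) : nat := #|Gn n|.

Definition Fn (n : nat) : nat :=
  if n %% 4 == 1 then n - 1 else if n %% 4 == 3 then n + 1 else n.

Definition composite (n : nat) : bool := (1 < n) && ~~ prime n.

Definition G_Lehmer (n : nat) : bool := composite n && (Phi n %| Fn n).

(* Main.v *)
Require Import Defs.
From mathcomp Require Import all_boot.
From mathcomp Require Import all_order all_algebra all_field.
From mathcomp Require Import ring zify.
Import GRing.Theory.
Set Implicit Arguments. Unset Strict Implicit. Unset Printing Implicit Defensive.

Section Circle.
Local Open Scope ring_scope.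
Variable F : finFieldType.
Hypothesis two_nz : (2 : F) != 0.

Definition Ccirc : {set F * F} := [set x | x.1 ^+ 2 + x.2 ^+ 2 == 1].
Definition fpar (t : F) : F * F := ((1 - t ^+ 2) / (1 + t ^+ 2), 2 * t / (1 + t ^+ 2)).
Definition gpar (x : F * F) : F := x.2 / (1 + x.1).

Lemma gfK t : 1 + t ^+ 2 != 0 -> gpar (fpar t) = t.
Proof.
move=> ht; rewrite /gpar /fpar /=.
have -> : 1 + (1 - t ^+ 2) / (1 + t ^+ 2) = 2 / (1 + t ^+ 2) by field.
field; rewrite ht two_nz //.
Qed.

Lemma card_circ : addn #|Ccirc| #|[set t : F | t ^+ 2 == -1]| = addn #|F| 1.
Proof.
set S := [set t : F | 1 + t ^+ 2 != 0].
have eqS : [set t : F | t ^+ 2 == -1] = ~: S.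
  by apply/setP => t; rewrite !inE negbK addrC addr_eq0.
have m1C : (-1, 0) \in Ccirc by rewrite inE /= expr0n /= addr0 sqrrN expr1n.
have imS : Ccirc :\ (-1, 0) = fpar @: S.
  apply/setP => [[x y]]; rewrite !inE /=; apply/idP/imsetP.
  - case/andP=> hne hC.
    have hv : 1 + x != 0.
      apply: contra hne => /eqP hx.
      have xe : x = -1 by rewrite -(addKr 1 x) hx addr0.
      move: hC; rewrite xe sqrrN expr1n -{2}(addr0 1) => /eqP/addrI/eqP.
      by rewrite sqrf_eq0 => /eqP ->.
    have hy2 : y ^+ 2 = 1 - x ^+ 2 by rewrite -(eqP hC) addrC addKr.
    have ht2 : 1 + (gpar (x, y)) ^+ 2 = 2 / (1 + x).
      by rewrite /gpar /= expr_div_n hy2; field; rewrite hv.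
    exists (gpar (x, y)); first by rewrite inE ht2 mulf_neq0 // invr_eq0.
    rewrite /fpar.
    have -> : 1 - gpar (x, y) ^+ 2 = 2 - (1 + gpar (x, y) ^+ 2) by ring.
    rewrite ht2 /gpar /=; congr (_, _); field; rewrite hv two_nz //.
  - case=> t; rewrite inE => ht [-> ->]; apply/andP; split.
    + apply/negP => /eqP [] h1 _.
      move: h1 => /(congr1 (fun z => z * (1 + t ^+ 2))).
      rewrite divfK // => h1.
      have e2 : (2 : F) = (1 - t ^+ 2) + (1 + t ^+ 2) by ring.
      rewrite h1 in e2.
      have : (2 : F) = 0 by rewrite e2; ring.
      by move/eqP; rewrite (negbTE two_nz).
    + apply/eqP; field; rewrite ht //.
rewrite eqS (cardsD1 (-1, 0)) m1C imS card_in_imset.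
  rewrite -(cardsC S).
  by rewrite -addnA addnC.
by move=> t1 t2; rewrite !inE => h1 h2 e; rewrite -(gfK h1) -(gfK h2) e.
Qed.
End Circle.


Section Sqm1.
Local Open Scope ring_scope.
Variable F : finFieldType.
Hypothesis two_nz : (2 : F) != 0.

Lemma fermat (a : F) : a != 0 -> a ^+ (#|F|.-1) = 1.
Proof.
move=> a0; apply: (mulIf a0); rewrite mul1r -exprSr prednK ?expf_card //.
by apply/card_gt0P; exists 0.
Qed.

Lemma one_neq_m1 : (1 : F) != -1.
Proof.
apply: contra two_nz => /eqP h.
by rewrite -[2]/(1 + 1 : F) {1}h addNr.
Qed.

Lemma sqm1_none : (#|F| %% 4 = 3)%N -> #|[set t : F | t ^+ 2 == -1]| = 0%N.
Proof.
move=> h4; apply/eqP; rewrite cards_eq0; apply/eqP/setP => t; rewrite !inE.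
apply/negP => /eqP ht.
have t0 : t != 0.
  apply/eqP => t0; move: ht; rewrite t0 expr0n /= => /eqP.
  by rewrite eq_sym oppr_eq0 oner_eq0.
have e : (#|F|.-1 = 2 * (2 * (#|F| %/ 4)).+1)%N.
  have := divn_eq #|F| 4; rewrite h4; lia.
have := fermat t0; rewrite e exprM ht exprS exprM sqrrN !expr1n mulr1.
move=> /eqP; rewrite eq_sym.
by rewrite (negbTE one_neq_m1).
Qed.

Lemma sqm1_two : (#|F| %% 4 = 1)%N -> #|[set t : F | t ^+ 2 == -1]| = 2%N.
Proof.
move=> h4.
set m := (#|F| %/ 4)%N.
have e : (#|F|.-1 = 2 * (2 * m))%N.
  have := divn_eq #|F| 4; rewrite h4 /m; lia.
have m0 : (0 < 2 * m)%N.
  have := divn_eq #|F| 4; rewrite h4 /m.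
  have : (2 < #|F|)%N.
    have : (1 < #|F|)%N by apply: finNzRing_gt1.
    have := h4; lia.
  lia.
have [a [a0 ah]] : exists a : F, a != 0 /\ a ^+ (2 * m) != 1.
  case/boolP: [exists a : F, (a != 0) && (a ^+ (2 * m) != 1)].
    by case/existsP => a /andP[? ?]; exists a.
  move=> /existsPn none; exfalso.
  pose rs := enum [set x : F | x != 0].
  have : (size rs <= 2 * m)%N.
    apply: max_unity_roots => //; last by rewrite enum_uniq.
    apply/allP => x; rewrite mem_enum inE => x0.
    rewrite unity_rootE; apply/negPn/negP => hx.
    by have := none x; rewrite x0 hx.
  rewrite -cardE.
  have -> : #|[set x : F | x != 0]| = #|[pred x : F | x != 0]| by apply: eq_card => x; rewrite inE.
  rewrite cardC1 e; clear -m0; lia.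
have am : a ^+ (2 * m) = -1.
  have := fermat a0; rewrite e [(2 * (2 * m))%N]mulnC exprM => /eqP.
  by rewrite sqrf_eq1 (negbTE ah) /= => /eqP.
set t0 := a ^+ m.
have t0sq : t0 ^+ 2 = -1 by rewrite /t0 -exprM mulnC.
have -> : [set t : F | t ^+ 2 == -1] = [set t0; -t0].
  by apply/setP => t; rewrite !inE -t0sq eqf_sqr.
rewrite cards2; suff -> : t0 != -t0 by [].
apply/negP => /eqP h.
have : t0 + t0 = 0 by rewrite {2}h addrN.
rewrite -mulr2n -mulr_natl => /eqP; rewrite mulf_eq0 (negbTE two_nz) /= => /eqP t00.
by move: t0sq; rewrite t00 expr0n /= => /eqP; rewrite eq_sym oppr_eq0 oner_eq0.
Qed.
End Sqm1.

Lemma Fp_eq_nat p (pr : prime p) (a b : nat) :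
  ((a%:R : 'F_p) == b%:R)%R = (a == b %[mod p]).
Proof.
apply/eqP/eqP => [h|h].
  by have := congr1 val h; rewrite /= !val_Fp_nat.
by apply: val_inj; rewrite /= !val_Fp_nat.
Qed.

Lemma Phi_Fp p : prime p -> Phi p = #|@Ccirc 'F_p|.
Proof.
move=> pr.
pose phi (x : 'F_p * 'F_p) : 'I_p * 'I_p := (cast_ord (Fp_cast pr) x.1, cast_ord (Fp_cast pr) x.2).
have key x : (phi x \in Gn p) = (x \in @Ccirc 'F_p).
  rewrite !inE /=.
  case: x => [x1 x2] /=.
  have e1 : x1 = ((x1 : nat)%:R : 'F_p)%R by rewrite natr_Zp.
  have e2 : x2 = ((x2 : nat)%:R : 'F_p)%R by rewrite natr_Zp.
  rewrite [in RHS]e1 [in RHS]e2 -!natrX -natrD.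
  by rewrite -[in RHS](mulr1n (1 : 'F_p)%R) Fp_eq_nat.
have phi_inj : injective phi.
  move=> [a1 a2] [b1 b2] [h1 h2].
  by rewrite (ord_inj h1) (ord_inj h2).
rewrite /Phi -(card_imset _ phi_inj).
suff -> : Gn p = phi @: @Ccirc 'F_p by [].
apply/setP => y; apply/idP/imsetP.
  move=> hy.
  exists (cast_ord (esym (Fp_cast pr)) y.1, cast_ord (esym (Fp_cast pr)) y.2).
    by rewrite -key /phi /= !cast_ordKV; case: y hy.
  by rewrite /phi /= !cast_ordKV; case: y {hy}.
by case=> x hx ->; rewrite key.
Qed.


Lemma sq_mod (a b d : nat) :
  ((a %% d) ^ 2 + (b %% d) ^ 2 == 1 %[mod d]) = (a ^ 2 + b ^ 2 == 1 %[mod d]).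
Proof. by rewrite -modnDm !modnXm modnDm. Qed.

Lemma Phi_mul p q : coprime p q -> 0 < p -> 0 < q -> Phi (p * q) = Phi p * Phi q.
Proof.
move=> co p0 q0.
have pq0 : 0 < p * q by rewrite muln_gt0 p0.
pose h (x : 'I_(p * q) * 'I_(p * q)) :=
  ((Ordinal (ltn_pmod x.1 p0), Ordinal (ltn_pmod x.2 p0)),
   (Ordinal (ltn_pmod x.1 q0), Ordinal (ltn_pmod x.2 q0))).
have h_inj : injective h.
  move=> [x1 x2] [y1 y2] [e1 e2 e3 e4].
  have E (a b : 'I_(p * q)) : a %% p = b %% p -> a %% q = b %% q -> a = b.
    move=> ea eb; apply: val_inj => /=.
    have : a == b %[mod p * q] by rewrite chinese_remainder // ea eb !eqxx.
    by rewrite !modn_small // => /eqP.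
  by rewrite (E _ _ e1 e3) (E _ _ e2 e4).
rewrite /Phi -cardsX -(card_imset _ h_inj).
suff -> : setX (Gn p) (Gn q) = h @: Gn (p * q) by [].
apply/setP => [[[a1 a2] [b1 b2]]]; rewrite !inE /=; apply/idP/imsetP.
  case/andP => ha hb.
  pose c1 := chinese p q a1 b1 %% (p * q).
  pose c2 := chinese p q a2 b2 %% (p * q).
  have c1p : c1 %% p = a1 by rewrite /c1 modn_dvdm ?dvdn_mulr // chinese_modl // modn_small.
  have c2p : c2 %% p = a2 by rewrite /c2 modn_dvdm ?dvdn_mulr // chinese_modl // modn_small.
  have c1q : c1 %% q = b1 by rewrite /c1 modn_dvdm ?dvdn_mull // chinese_modr // modn_small.
  have c2q : c2 %% q = b2 by rewrite /c2 modn_dvdm ?dvdn_mull // chinese_modr // modn_small.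
  exists (Ordinal (ltn_pmod (chinese p q a1 b1) pq0), Ordinal (ltn_pmod (chinese p q a2 b2) pq0)).
    rewrite inE /= chinese_remainder // -(sq_mod _ _ p) -(sq_mod _ _ q).
    by rewrite -/c1 -/c2 c1p c2p c1q c2q ha hb.
  by rewrite /h /=; congr ((_, _), (_, _)); apply: val_inj => /=; rewrite -/c1 -/c2.
case=> [[x1 x2]]; rewrite inE /= chinese_remainder // => /andP[hp hq] [-> -> -> ->] /=.
by rewrite sq_mod hp sq_mod hq.
Qed.

Lemma dvd_small a b : 0 < b -> b < 2 * a -> (a %| b) = (a == b).
Proof. move=> b0 b2; apply/idP/eqP => [/dvdnP[k e]|->//]. subst b. case: k b0 b2 => [|[|k]] /=. lia. lia. nia. Qed.

Lemma Phi_prime p : prime p -> odd p ->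
  Phi p = if p %% 4 == 1 then p - 1 else p + 1.
Proof.
move=> pr op.
have p3 : 3 <= p.
  have := prime_gt1 pr; case: p pr op => [|[|[|p]]] //.
have two : (2 : 'F_p)%R != 0%R.
  rewrite -[in X in (_ != X)%R](mulr0n (1 : 'F_p)%R) Fp_eq_nat //.
  by rewrite mod0n modn_small.
have := card_circ two; rewrite card_Fp // -Phi_Fp //.
have hp4 : p %% 4 = 1 \/ p %% 4 = 3.
  have := modn2 p; rewrite op => h; lia.
case: hp4 => h4; rewrite h4 /=.
  have := sqm1_two two; rewrite card_Fp // => -> //; lia.
have := sqm1_none two; rewrite card_Fp // => -> //; lia.
Qed.

Theorem mainTheorem14 (p q : nat) :
  prime p -> prime q -> odd p -> odd q -> p < q ->
  G_Lehmer (p * q) = (q == p + 2) && (8 %| p + q).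
Proof.
move=> pp pq op oq lt.
have p3 : 3 <= p.
  have := prime_gt1 pp; case: (p) pp op => [|[|[|p']]] //.
have co : coprime p q.
  rewrite prime_coprime // dvdn_prime2 //; apply/eqP; lia.
have comp : composite (p * q).
  rewrite /composite; apply/andP; split; first by nia.
  apply/negP => hpq.
  have := prime_nt_dvdP hpq (_ : p != 1) (dvdn_mulr q (dvdnn p)).
  move=> e; have : p = p * q by apply: e; apply/eqP; lia.
  nia.
rewrite /G_Lehmer comp /= Phi_mul //; try lia.
rewrite !Phi_prime // /Fn -modnMm.
have hp4 : p %% 4 = 1 \/ p %% 4 = 3 by have := modn2 p; rewrite op => h; lia.
have hq4 : q %% 4 = 1 \/ q %% 4 = 3 by have := modn2 q; rewrite oq => h; lia.
have q2 : p + 2 <= q.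
  have := modn2 p; have := modn2 q; rewrite op oq => h1 h2; lia.
case: hp4 => hp; case: hq4 => hq; rewrite hp hq /=.
- have -> : (q == p + 2) = false by apply/negbTE/eqP; lia.
  clear -p3 q2.
  rewrite dvd_small; [|nia|nia].
  apply/negbTE/eqP; nia.
- have -> : (q == p + 2) && (8 %| p + q) = false.
    apply/negbTE/negP => /andP[/eqP e /dvdnP[k]]; lia.
  clear -p3 q2.
  rewrite dvd_small; [|nia|nia].
  apply/negbTE/eqP; nia.
- case: (boolP (q == p + 2)) => [/eqP e | ne].
    have h8 : 8 %| p + q by apply/dvdnP; exists (p %/ 4 + 1); lia.
    rewrite h8 andbT; subst q; rewrite ?eqxx.
    clear -p3; rewrite dvd_small; [|nia|nia].
    apply/eqP; nia.
  have q3 : p + 3 <= q by move/eqP: ne; lia.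
  rewrite /=.
  clear -p3 q3.
  rewrite dvd_small; [|nia|nia].
  apply/negbTE/eqP; nia.
- rewrite andbC; have -> : (q == p + 2) = false by apply/negbTE/eqP; lia.
  rewrite andbF.
  clear -p3 q2.
  rewrite gtnNdvd //; nia.
Qed.
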